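(* Let $n\ge 3$ and let $D_n=\langle \rho,\tau \mid \rho^n=\tau^2=1,\ \tau\rho\tau=\rho^{-1}\rangle$ be the dihedral group of order $2n$. Let $0<i<j<n$ and $X=\mathrm{Cay}(D_n;\{\tau,\rho^i\tau,\rho^j\tau\})$. Then $X$ is connected if and only if $\gcd(n,i,j)=1$. Moreover, if $\gcd(n,i,j)=1$ and $m=\gcd(n,i)$, then $X$ is isomorphic to the honeycomb toroidal graph $\mathrm{HTG}(m,2n/m,\ell)$ for some integer $\ell$.
   Context: For a finite group $G$ and $S\subset G$ with $1\notin S$ and $S=S^{-1}$, the Cayley graph $\mathrm{Cay}(G;S)$ has vertex set $G$, with $g$ adjacent to $h$ iff $h=gs$ for some $s\in S$. Honeycomb toroidal graph: let $m\ge 1$ be an integer, $n'\ge 4$ an even integer, and $\ell$ an integer with $\ell\equiv m \pmod 2$. The graph $\mathrm{HTG}(m,n',\ell)$ has vertex set $\{u_{a,b}: 0\le a\le m-1,\ b\in\mathbb{Z}_{n'}\}$ and edges: vertical edges $u_{a,b}u_{a,b+1}$ for all $a,b$; flat edges $u_{a,b}u_{a+1,b}$ for $0\le a\le m-2$ and all $b$ with $a+b$ odd; jump edges $u_{m-1,b}u_{0,b+\ell}$ for all $b$ with $b\equiv m\pmod 2$ (second subscripts modulo $n'$). *)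

(* Defs.v *)
From mathcomp Require Import all_boot all_algebra all_fingroup.
Set Implicit Arguments. Unset Strict Implicit. Unset Printing Implicit Defensive.

Definition cay_adj (gT : finGroupType) (S : {set gT}) : rel gT :=
  fun g h => (g^-1 * h)%g \in S.

Definition connected_graph (T : finType) (e : rel T) : Prop :=
  forall x y : T, connect e x y.

Definition graph_iso (T1 T2 : finType) (e1 : rel T1) (e2 : rel T2) : Prop :=
  exists f : T1 -> T2, bijective f /\ forall x y, e2 (f x) (f y) = e1 x y.

(* Honeycomb toroidal graph HTG(m, n', l): vertex u_{a,b} is the pair (a, b)
   with a : 'I_m and b : 'I_n' (b read in Z_n').  Directed "edge generators": *)
Definition htg_edge (m n' : nat) (l : int) (x y : 'I_m * 'I_n') : bool :=
  let: (a1, b1) := x in let: (a2, b2) := y in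
  [&& (a1 : nat) == a2 & (b2 : nat) == (b1.+1 %% n')%N]
  || [&& (a2 : nat) == a1.+1, (b1 : nat) == b2 & odd (a1 + b1)]
  || [&& (a1 : nat) == m.-1, (a2 : nat) == 0%N, odd b1 == odd m
       & ((b2 : nat)%:Z == ((b1 : nat)%:Z + l) %% (n' : nat)%:Z)%Z].

Definition htg_adj (m n' : nat) (l : int) : rel ('I_m * 'I_n') :=
  fun x y => htg_edge l x y || htg_edge l y x.

(* Main.v *)
Require Import Defs.
From mathcomp Require Import all_boot all_algebra all_fingroup all_solvable.
From mathcomp Require Import zify.
Set Implicit Arguments. Unset Strict Implicit. Unset Printing Implicit Defensive.
Lemma mod_cancel_coprime d k x y : coprime d k ->
  x * k = y * k %[mod d] -> x = y %[mod d].
Proof.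
move=> co.
wlog le : x y / x <= y.
  move=> W h; case: (leqP x y) => [|/ltnW] hxy; first exact: W.
  by apply/esym/W.
move=> /eqP; rewrite eq_sym eqn_mod_dvd ?leq_mul2r ?le ?orbT // -mulnBl.
by rewrite Gauss_dvdl // -eqn_mod_dvd // eq_sym => /eqP.
Qed.

Lemma mod_cancel_small d k x y : coprime d k -> x < d -> y < d ->
  x * k = y * k %[mod d] -> x = y.
Proof.
by move=> co hx hy /(mod_cancel_coprime co); rewrite !modn_small.
Qed.

Lemma hf_eq a b n : a <= n.*2 ->
  odd (a + b) + ((b + n.*2 - a)./2).*2 = b + n.*2 - a.
Proof.
move=> ha; rewrite -[RHS]odd_double_half; congr (_ + _).
rewrite oddB ?oddD ?odd_double ?addbF ?[odd b (+) _]addbC //; lia.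
Qed.

Lemma arith_inj (m N I j a a' b b' h h' p : nat) :
  0 < m -> 0 < N -> coprime m j -> coprime N I -> a < m -> a' < m ->
  b < N.*2 -> b' < N.*2 ->
  p + h.*2 = b + (N * m).*2 - a -> p + h'.*2 = b' + (N * m).*2 - a' ->
  a * j + h * (I * m) = a' * j + h' * (I * m) %[mod N * m] -> a = a' /\ b = b'.
Proof.
move=> m0 N0 cj cN ha ha' hb hb' e1 e2 hm.
have aa : a = a'.
  apply: (mod_cancel_small cj ha ha').
  move: hm => /(congr1 (modn^~ m)); rewrite !modn_dvdm ?dvdn_mull //.
  by rewrite !mulnA ![_ + _ * _ * m]addnC !modnMDl.
subst a'; split => //.
move: hm => /eqP; rewrite eqn_modDl => /eqP hm.
have hI : h * I = h' * I %[mod N].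
  apply/eqP; rewrite -(eqn_pmul2r m0) !muln_modl // -!mulnA; exact/eqP.
have hr : h %% N = h' %% N by exact: (mod_cancel_coprime cN hI).
have E1 := divn_eq h N; have E2 := divn_eq h' N.
move: E1 E2; rewrite hr.
move: (h %/ N) (h' %/ N) (h' %% N) => q q' r E1 E2.
subst h h'.
clear hm hI hr.
have aY : a <= N * m by rewrite (leq_trans (ltnW ha)) // leq_pmull.
case: (ltngtP q q') => hq.
- have : q.+1 * N <= q' * N by rewrite leq_mul2r hq orbT.
  rewrite mulSn; move: (q * N) (q' * N) (N * m) e1 e2 aY => X X' Y e1 e2 aY.
  lia.
- have : q'.+1 * N <= q * N by rewrite leq_mul2r hq orbT.
  rewrite mulSn; move: (q * N) (q' * N) (N * m) e1 e2 aY => X X' Y e1 e2 aY.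
  lia.
- subst q'; move: (q * N) (N * m) e1 e2 aY => X Y e1 e2 aY. lia.
Qed.
Import GroupScope.

Lemma dih_facts (n : nat) (gT : finGroupType) (rho tau : gT)
  (hn : (3 <= n)%N)
  (hgen : <<[set rho; tau]>>%g = [set: gT])
  (hrho : (rho ^+ n)%g = 1%g) (htau : (tau ^+ 2)%g = 1%g)
  (hrel : (tau * rho * tau)%g = (rho^-1)%g)
  (hord : #|gT| = n.*2) :
  [/\ #[rho] = n, tau \notin <[rho]>, tau^-1 = tau & rho ^ tau = rho^-1].
Proof.
have tV : tau^-1 = tau by apply/eqP; rewrite eq_invg_mul -htau.
have rJ : rho ^ tau = rho^-1 by rewrite /conjg tV mulgA.
have ordle : (#[rho] <= n)%N by apply: dvdn_leq; [lia | rewrite order_dvdn hrho].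
have taule : (#[tau] <= 2)%N by apply: dvdn_leq => //; rewrite order_dvdn htau.
have nK : <[tau]> \subset 'N(<[rho]>).
  rewrite cycle_subG inE -cycleJ rJ cycleV //.
have jE := norm_joinEr nK.
have sT : [set: gT] \subset <[rho]> * <[tau]>.
  rewrite -hgen -jE gen_subG; apply/subsetP => x; rewrite !inE => /orP[]/eqP->.
    by rewrite mem_gen // inE cycle_id.
  by rewrite mem_gen // inE cycle_id orbT.
have c1 : (#|[set: gT]| <= #[rho] * #[tau])%N.
  apply: leq_trans (subset_leq_card sT) _.
  rewrite /order mul_cardG leq_pmulr // cardG_gt0.
rewrite cardsT hord in c1.
have oE : #[rho] = n by nia.
split => //.
apply/negP => tK.
have : [set: gT] \subset <[rho]>.
  rewrite -hgen gen_subG; apply/subsetP => x; rewrite !inE => /orP[]/eqP-> //.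
  exact: cycle_id.
move/subset_leq_card; rewrite cardsT hord -orderE oE; lia.
Qed.
Lemma cay_transl (gT : finGroupType) (S : {set gT}) x y z :
  connect (cay_adj S) x y -> connect (cay_adj S) (z * x) (z * y).
Proof.
move=> /connectP[p pth ->]; apply/connectP; exists (map (fun w => z * w) p).
  elim: p x pth => //= a p IH x /andP[ha hp]; rewrite IH // andbT.
  by rewrite /cay_adj invMg -mulgA (mulKg z).
by rewrite last_map.
Qed.

Lemma gcd_closed (gT : finGroupType) (G : {group gT}) (r : gT) x y :
  r ^+ x \in G -> r ^+ y \in G -> r ^+ (gcdn x y) \in G.
Proof.
elim: x {-2}x (leqnn x) y => [|k IH] x hx y.
  by move: hx; rewrite leqn0 => /eqP-> _; rewrite gcd0n.
case: x hx => [|x] hx; first by rewrite gcd0n.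
move=> hX hY; rewrite gcdnC -(gcdn_modl y x.+1); apply: IH => //.
  by have := ltn_pmod y (ltn0Sn x); lia.
have E : r ^+ y = r ^+ (x.+1 * (y %/ x.+1)) * r ^+ (y %% x.+1).
  by rewrite -expgD mulnC -divn_eq.
have -> : r ^+ (y %% x.+1) = (r ^+ (x.+1 * (y %/ x.+1)))^-1 * r ^+ y.
  by rewrite E mulKg.
by rewrite groupM ?groupV // expgM groupX.
Qed.

Lemma conn_part (n : nat) (gT : finGroupType) (rho tau : gT)
  (hn : (3 <= n)%N)
  (hgen : <<[set rho; tau]>>%g = [set: gT])
  (hrho : (rho ^+ n)%g = 1%g) (htau : (tau ^+ 2)%g = 1%g)
  (hrel : (tau * rho * tau)%g = (rho^-1)%g)
  (hord : #|gT| = n.*2)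
  (i j : nat) (hi : (0 < i)%N) (hij : (i < j)%N) (hjn : (j < n)%N) :
  let S := [set tau; (rho ^+ i * tau)%g; (rho ^+ j * tau)%g] in
  (connected_graph (cay_adj S) <-> gcdn (gcdn n i) j = 1%N).
Proof.
move=> S.
have [oE tK tV rJ] := dih_facts hn hgen hrho htau hrel hord.
have tt : tau * tau = 1 by rewrite -htau.
have sS : forall e, rho ^+ e * tau \in S -> (rho ^+ e * tau) * (rho ^+ e * tau) = 1.
  move=> e _; rewrite -mulgA -{1}tV -conjgE.
  by rewrite conjXg rJ expgVn mulgV.
have edge : forall u s, s \in S -> cay_adj S u (u * s).
  by move=> u s hs; rewrite /cay_adj mulKg.
split.
- move=> hc.
  set d := gcdn (gcdn n i) j.
  have dn : (d %| n)%N by rewrite /d (dvdn_trans (dvdn_gcdl _ _)) // dvdn_gcdl.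
  have di : (d %| i)%N by rewrite /d (dvdn_trans (dvdn_gcdl _ _)) // dvdn_gcdr.
  have dj : (d %| j)%N by rewrite /d dvdn_gcdr.
  set D := <[rho ^+ d]>.
  have inD : forall e, (d %| e)%N -> rho ^+ e \in D.
    by move=> e /dvdnP[k ->]; rewrite mulnC expgM mem_cycle.
  pose A := [set w | (w \in D) || (w * tau \in D)].
  have clA : forall u s, u \in A -> s \in S -> u * s \in A.
    move=> u s; rewrite !inE => hu.
    have key : forall e, (d %| e)%N -> (u * (rho ^+ e * tau) \in D) || (u * (rho ^+ e * tau) * tau \in D).
      move=> e de; case/orP: hu => hu.
          by apply/orP; right; rewrite -!mulgA tt mulg1 groupM // inD.
      have -> : u * (rho ^+ e * tau) = (u * tau) * (rho ^+ e) ^ tau.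
        by rewrite conjgE tV !mulgA -(mulgA u tau tau) tt mulg1.
      by rewrite groupM // conjXg rJ expgVn groupV inD.
    case/orP=> [/orP[]|] /eqP->.
    + by have := key 0 (dvdn0 d); rewrite expg0 mul1g.
    + exact: key.
    + exact: key.
  have reach : forall w, connect (cay_adj S) 1 w -> w \in A.
    move=> w /connectP[p pth ->]; have : 1 \in A by rewrite inE group1.
    elim: p 1 pth => //= a p IH x /andP[ha hp] hx; apply: IH => //.
    by move: ha; rewrite /cay_adj => ha; rewrite -(mulKVg x a); apply: clA.
  have := reach rho (hc 1 rho); rewrite inE => /orP[] hD.
    case/cycleP: hD => k; rewrite -expgM => /eqP.
    rewrite -{1}(expg1 rho) eq_expg_mod_order oE => /eqP/(congr1 (modn^~ d)).
    rewrite !modn_dvdm // modnMr => h1.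
    by apply/eqP; rewrite -dvdn1 /dvdn h1.
  case/negP: tK.
  have : rho * tau \in <[rho]>.
    by apply: (subsetP _ _ hD); rewrite cycle_subG mem_cycle.
  by move=> h; rewrite -(mulKg rho tau) groupM ?groupV ?cycle_id.
- move=> hg x y.
  have hH : group_set [set w | connect (cay_adj S) 1 w].
    apply/group_setP; split; first by rewrite inE connect0.
    move=> u v; rewrite !inE => hu hv; apply: connect_trans hu _.
    by have := cay_transl u hv; rewrite mulg1.
  pose H := Group hH.
  have sH : forall s, s \in S -> s \in H.
    by move=> s hs; rewrite inE; apply: connect1; rewrite -(mul1g s) edge.
  have rH : forall e, rho ^+ e * tau \in S -> rho ^+ e \in H.
    move=> e he; have -> : rho ^+ e = (rho ^+ e * tau) * tau by rewrite -mulgA tt mulg1.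
    by rewrite groupM ?sH // !inE eqxx.
  have ri : rho ^+ i \in H by apply: rH; rewrite !inE eqxx orbT.
  have rj : rho ^+ j \in H by apply: rH; rewrite !inE eqxx !orbT.
  have rn : rho ^+ n \in H by rewrite hrho group1.
  have := gcd_closed (gcd_closed rn ri) rj; rewrite hg expg1 => rhoH.
  have tH : tau \in H by rewrite sH // !inE eqxx.
  have allH : [set: gT] \subset H.
    by rewrite -hgen gen_subG; apply/subsetP => w /set2P[]->.
  have := subsetP allH (x^-1 * y) (in_setT _); rewrite inE => /(cay_transl x).
  by rewrite mulg1 mulKVg.
Qed.
Lemma iso_part (n : nat) (gT : finGroupType) (rho tau : gT)
  (hn : (3 <= n)%N)
  (hgen : <<[set rho; tau]>>%g = [set: gT])
  (hrho : (rho ^+ n)%g = 1%g) (htau : (tau ^+ 2)%g = 1%g)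
  (hrel : (tau * rho * tau)%g = (rho^-1)%g)
  (hord : #|gT| = n.*2)
  (i j : nat) (hi : (0 < i)%N) (hij : (i < j)%N) (hjn : (j < n)%N) :
  let S := [set tau; (rho ^+ i * tau)%g; (rho ^+ j * tau)%g] in
  (gcdn (gcdn n i) j = 1%N ->
   let m := gcdn n i in
   exists l : int, (((2 : int) %| (l - Posz m)%R)%Z) /\
     graph_iso (cay_adj S) (htg_adj (m := m) (n' := (n.*2 %/ m)%N) l)).
Proof.
move=> S hg m.
have [oE tK tV rJ] := dih_facts hn hgen hrho htau hrel hord.
have tt : tau * tau = 1 by rewrite -htau.
have m0 : (0 < m)%N by rewrite gcdn_gt0 hi orbT.
have mn : (m %| n)%N := dvdn_gcdl n i.
have mi : (m %| i)%N := dvdn_gcdr n i.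
have n0 : (0 < n)%N by lia.
set N := (n %/ m)%N.
have nE : n = (N * m)%N by rewrite divnK.
set I := (i %/ m)%N.
have iE : i = (I * m)%N by rewrite divnK.
have N0 : (0 < N)%N by move: n0; rewrite nE muln_gt0 => /andP[].
have cj : coprime m j by rewrite /coprime hg.
have cN : coprime N I.
  by rewrite /coprime -(eqn_pmul2r m0) mul1n muln_gcdl -nE -iE.
set n' := (n.*2 %/ m)%N.
have n'E : n' = N.*2 by rewrite /n' nE -mul2n mulnA mulnK // mul2n.
have n'0 : (0 < n')%N by rewrite n'E double_gt0.
have rNi : rho ^+ (N * i) = 1.
  by rewrite iE mulnCA -nE mulnC expgM hrho expg1n.
have radd : forall x y t, y = (x + t * (N * i))%N -> rho ^+ y = rho ^+ x.
  by move=> x y t ->; rewrite expgD mulnC expgM rNi expg1n mulg1.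
case: (Bezoutl i n0) => a0 ha0 hdiv.
have [q hq] : exists q, (m + a0 * i = q * n)%N by apply/dvdnP.
pose c0 := ((n - a0) * j + n * m)%N.
have c0m : (m <= c0)%N by rewrite /c0 (leq_trans _ (leq_addl _ _)) // leq_pmull.
have hc0 : rho ^+ (c0 * i) = rho ^+ (m * j).
  have h1 : rho ^+ ((n - a0) * i) = rho ^+ m.
    transitivity (rho ^+ ((n - a0) * i) * rho ^+ (m + a0 * i)).
      by rewrite hq (mulnC q) (expgM _ n q) hrho expg1n mulg1.
    rewrite -expgD mulnBl.
    have : (a0 * i <= n * i)%N by rewrite leq_mul2r ltnW ?orbT.
    move=> hXY; rewrite (_ : (n * i - a0 * i + (m + a0 * i) = m + n * i)%N).
      by rewrite expgD expgM hrho expg1n mulg1.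
    by move: hXY; move: (a0 * i)%N (n * i)%N => X Y; lia.
  rewrite /c0 mulnDl expgD mulnAC (expgM _ ((n - a0) * i)) h1 -expgM -mulnA (expgM _ n) hrho expg1n mulg1.
  done.
pose D := (c0.*2 - m)%N.
exists (Posz D); split.
  rewrite subzn; last by rewrite /D; lia.
  rewrite dvdzE /= (_ : (D - m = (c0 - m) * 2)%N); first by rewrite dvdn_mull.
  by rewrite /D; lia.
pose hf (a b : nat) := ((b + n.*2 - a)./2)%N.
pose g (x : 'I_m * 'I_n') : gT :=
  rho ^+ (x.1 * j + hf x.1 x.2 * i) * (if odd (x.1 + x.2) then 1 else tau).
pose vs (x : 'I_m * 'I_n') : 'I_m * 'I_n' := (x.1, Ordinal (ltn_pmod x.2.+1 n'0)).
pose js (x : 'I_m * 'I_n') : 'I_m * 'I_n' :=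
  (Ordinal (ltn_pmod x.1.+1 m0),
   if (x.1.+1 < m)%N then x.2 else Ordinal (ltn_pmod (x.2 + D) n'0)).
have hfE : forall (a b : nat), (a <= n)%N ->
    (odd (a + b) + (hf a b).*2 = b + n.*2 - a)%N.
  by move=> a b ha; apply: hf_eq; lia.
have mle : (m <= n)%N by apply: dvdn_leq.
have lin : forall h h' x : nat, h.+1 = (h' + N)%N -> (x + h * i + i = x + h' * i + 1 * (N * i))%N.
  by move=> h h' x e; rewrite mul1n -addnA -mulSnr e mulnDl addnA.
have lin2 : forall h h' x : nat, h = (h' + N)%N -> (x + h * i = x + h' * i + 1 * (N * i))%N.
  by move=> h h' x e; rewrite mul1n e mulnDl addnA.
have G1 : forall x : 'I_m * 'I_n', g (vs x) = g x * (if odd (x.1 + x.2) then rho ^+ i * tau else tau).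
  move=> [a b]; rewrite /g /vs /=.
  have ha : (a <= n)%N by apply: leq_trans (ltnW (ltn_ord a)) mle.
  have e1 := hfE a b ha.
  case: (ltnP b.+1 n') => hb.
    rewrite (modn_small hb); have e2 := hfE a b.+1 ha.
    rewrite addnS /= in e2 *.
    move: e1 e2; case: (odd (a + b)) => /= e1 e2.
      have hh : hf a b.+1 = (hf a b).+1 by clear -e1 e2 ha; lia.
      by rewrite mulg1 mulgA -expgD hh mulSnr addnA.
    have hh : hf a b.+1 = hf a b by clear -e1 e2 ha; lia.
    by rewrite mulg1 -mulgA tt mulg1 hh.
  have bE : b.+1 = n' by have := ltn_ord b; clear -hb; lia.
  rewrite bE modnn; have e2 := hfE a 0 ha.
  have on' : odd n' = false by rewrite n'E odd_double.
  have ob : odd b by move: (congr1 odd bE); rewrite on' /=; case: (odd b).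
  rewrite addn0 in e2 *.
  move: e1 e2; rewrite oddD ob; case: (odd a) => /= e1 e2.
    have hh : hf a b = (hf a 0 + N)%N by clear -e1 e2 ha bE n'E; lia.
    by rewrite -mulgA tt !mulg1; apply/esym/radd/lin2.
  have hh : (hf a b).+1 = (hf a 0 + N)%N by clear -e1 e2 ha bE n'E; lia.
  by rewrite mulg1 mulgA -expgD; congr (_ * _); apply/esym/radd/lin.
have G2 : forall x : 'I_m * 'I_n', odd (x.1 + x.2) -> g (js x) = g x * (rho ^+ j * tau).
  move=> [a b] /= od; rewrite /g /js /= od.
  have ha : (a <= n)%N by apply: leq_trans (ltnW (ltn_ord a)) mle.
  have e1 := hfE a b ha; rewrite od in e1.
  case: (ltnP a.+1 m) => ham.
    rewrite (modn_small ham).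
    have ha1 : (a.+1 <= n)%N by apply: ltnW (leq_trans ham mle).
    have e2 := hfE a.+1 b ha1; rewrite addSn /= od /= in e2 *.
    have hh : hf a.+1 b = hf a b by clear -e1 e2 ha; lia.
    by rewrite mulg1 mulgA -expgD hh mulSn (addnC j) addnAC.
  have am : a.+1 = m by have := ltn_ord a; clear -ham; lia.
  rewrite am modnn /=.
  set b2 := ((b + D) %% n')%N.
  have on' : odd n' = false by rewrite n'E odd_double.
  have oD : odd D = odd m.
    have : (D + m = c0.*2)%N by rewrite /D; clear -c0m; lia.
    by move/(congr1 odd); rewrite oddD odd_double; case: (odd D); case: (odd m).
  have ob2 : odd b2 = false.
    rewrite /b2 odd_mod // oddD oD -am /=; move: od; rewrite oddD.
    by case: (odd a); case: (odd b).
  rewrite ob2.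
  have e2 := hfE 0 b2 (leq0n n); rewrite ob2 /= in e2.
  have E3 : (b + D = (b + D) %/ n' * N * 2 + b2)%N.
    by rewrite -mulnA muln2 -n'E {1}(divn_eq (b + D) n').
  have hh : (c0 + hf a b = (b + D) %/ n' * N + hf 0 b2)%N.
    move: E3 e1 e2; move: ((b + D) %/ n' * N)%N => Q; rewrite /D; clear -c0m am ha; lia.
  rewrite mulg1 mul0n add0n mulgA -expgD; congr (_ * _).
  have -> : (a * j + hf a b * i + j = m * j + hf a b * i)%N.
    have mj : (m * j = a * j + j)%N by rewrite -mulSnr am.
    by rewrite mj addnAC.
  rewrite expgD -hc0 -expgD -mulnDl hh; apply/esym/radd.
  by rewrite mulnDl addnC mulnA.
have E1 : forall x y : 'I_m * 'I_n', htg_edge (Posz D) x y -> y = vs x \/ (odd (x.1 + x.2) /\ y = js x).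
  move=> [a1 b1] [a2 b2]; rewrite /htg_edge /=.
  case/orP=> [/orP[/andP[/eqP e1 /eqP e2] | /and3P[/eqP e1 /eqP e2 od]] | /and4P[/eqP e1 /eqP e2 /eqP e3 /eqP e4]].
  - by left; rewrite /vs /=; congr (_, _); apply: val_inj.
  - right; split => //.
    have ha : (a1.+1 < m)%N by rewrite -e1.
    rewrite /js /= ha; congr (_, _); apply: val_inj => //=.
    by rewrite modn_small.
  - right.
    have am : a1.+1 = m by clear -e1 m0; lia.
    have om : odd a1.+1 = odd m by rewrite am.
    have od : odd (a1 + b1) by rewrite oddD e3 -om /=; case: (odd a1).
    split => //.
    rewrite /js /= am ltnn; congr (_, _); apply: val_inj => /=.
      by rewrite modnn.
    by move: e4; rewrite -PoszD modz_nat; case.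
have E2 : forall x : 'I_m * 'I_n', htg_edge (Posz D) x (vs x).
  by move=> [a b]; rewrite /htg_edge /vs /= !eqxx.
have E3 : forall x : 'I_m * 'I_n', odd (x.1 + x.2) -> htg_edge (Posz D) x (js x).
  move=> [a b] /= od; rewrite /htg_edge /js /=.
  case: (ltnP a.+1 m) => ha.
    by rewrite modn_small // !eqxx od /= orbT.
  have am : a.+1 = m by have := ltn_ord a; clear -ha; lia.
  apply/orP; right; apply/and4P; split.
  - by apply/eqP; clear -am; lia.
  - by rewrite am modnn.
  - have om : odd a.+1 = odd m by rewrite am.
    by rewrite -om /=; move: od; rewrite oddD; case: (odd a); case: (odd b).
  - by rewrite -PoszD modz_nat.
have Col : forall x : 'I_m * 'I_n', (g x \in <[rho]>) = odd (x.1 + x.2).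
  move=> [a b]; rewrite /g /=; case: (odd (a + b)).
    by rewrite mulg1 mem_cycle.
  by rewrite groupMl ?mem_cycle // (negbTE tK).
have ginj : injective g.
  move=> [a b] [a' b'] hgg.
  have hc : odd (a + b) = odd (a' + b').
    by have := Col (a, b); rewrite /= hgg Col.
  move: hgg; rewrite /g /= hc => /mulIg /eqP; rewrite eq_expg_mod_order oE => /eqP hmod.
  have ha : (a <= n)%N by apply: leq_trans (ltnW (ltn_ord a)) mle.
  have ha' : (a' <= n)%N by apply: leq_trans (ltnW (ltn_ord a')) mle.
  have e1 := hfE a b ha; have e2 := hfE a' b' ha'.
  rewrite -hc nE in e2; rewrite nE in e1; rewrite iE nE in hmod.
  have hb : (b < N.*2)%N by rewrite -n'E ltn_ord.
  have hb' : (b' < N.*2)%N by rewrite -n'E ltn_ord.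
  have [ea eb] := arith_inj m0 N0 cj cN (ltn_ord a) (ltn_ord a') hb hb' e1 e2 hmod.
  by congr (_, _); apply: val_inj.
have gbij : bijective g.
  refine (inj_card_bij ginj _); rewrite card_prod !card_ord hord n'E nE.
  by rewrite -!muln2 mulnA (mulnC N m).
have sForm : forall s, s \in S -> exists e, s = rho ^+ e * tau.
  move=> s; rewrite !inE => /orP[/orP[]|]/eqP->; [exists 0%N; by rewrite mul1g|exists i|exists j] => //.
have ss : forall e, (rho ^+ e * tau) * (rho ^+ e * tau) = 1.
  move=> e; rewrite -mulgA -{1}tV -conjgE.
  by rewrite conjXg rJ expgVn mulgV.
have sinv : forall s, s \in S -> s^-1 = s.
  by move=> s /sForm[e ->]; apply: (mulgI (rho ^+ e * tau)); rewrite mulgV ss.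
have sK : forall e, rho ^+ e * tau \notin <[rho]> by move=> e; rewrite groupMl ?mem_cycle.
have prodK : forall c e, rho ^+ c * tau * (rho ^+ e * tau) \in <[rho]>.
  move=> c e; have -> : rho ^+ c * tau * (rho ^+ e * tau) = rho ^+ c * (rho ^+ e) ^ tau.
    by rewrite conjgE tV !mulgA.
  by rewrite conjXg rJ expgVn groupM ?groupV ?mem_cycle.
have edge : forall u s, s \in S -> cay_adj S u (u * s).
  by move=> u s hs; rewrite /cay_adj mulKg.
have csym : forall x y, cay_adj S x y -> cay_adj S y x.
  move=> x y; rewrite /cay_adj => h.
  by rewrite -(invgK x) -invMg -(sinv _ h) invgK.
have rel : forall x y, cay_adj S (g x) (g y) = htg_adj (Posz D) x y.
  move=> x y; apply/idP/idP.
  - move=> hc; set s := (g x)^-1 * g y.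
    have hs : s \in S := hc.
    have gy : g y = g x * s by rewrite mulKVg.
    have [e se] := sForm s hs.
    have s3 : [\/ s = tau, s = rho ^+ i * tau | s = rho ^+ j * tau].
      by move: hs; rewrite !inE => /orP[/orP[]|]/eqP->; [constructor 1|constructor 2|constructor 3].
    rewrite /htg_adj; case hx : (odd (x.1 + x.2)).
    + have hy : odd (y.1 + y.2) = false.
        by rewrite -Col gy groupMl ?Col ?hx // se (negbTE (sK e)).
      case: s3 => hs3.
      * have : g (vs y) = g x by rewrite G1 hy gy hs3 -mulgA tt mulg1.
        by move/ginj <-; rewrite E2 orbT.
      * have : g y = g (vs x) by rewrite G1 hx gy hs3.
        by move/ginj ->; rewrite E2.
      * have : g y = g (js x) by rewrite G2 // gy hs3.
        by move/ginj ->; rewrite E3.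
    + have hy : odd (y.1 + y.2).
        rewrite -Col gy se /g hx; exact: prodK.
      case: s3 => hs3.
      * have : g y = g (vs x) by rewrite G1 hx gy hs3.
        by move/ginj ->; rewrite E2.
      * have : g (vs y) = g x by rewrite G1 hy gy -mulgA -hs3 se ss mulg1.
        by move/ginj <-; rewrite E2 orbT.
      * have : g (js y) = g x by rewrite G2 // gy -mulgA -hs3 se ss mulg1.
        by move/ginj <-; rewrite E3 ?orbT.
  - rewrite /htg_adj => /orP[] /E1 [->|[od ->]].
    + by rewrite G1; apply: edge; case: ifP => _; rewrite !inE eqxx ?orbT.
    + by rewrite G2 //; apply: edge; rewrite !inE eqxx !orbT.
    + by apply: csym; rewrite G1; apply: edge; case: ifP => _; rewrite !inE eqxx ?orbT.
    + by apply: csym; rewrite G2 //; apply: edge; rewrite !inE eqxx !orbT.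
case: gbij => g' gK g'K.
exists g'; split; first by exists g.
by move=> x y; rewrite -rel !g'K.
Qed.

Theorem mainTheorem8 (n : nat) (gT : finGroupType) (rho tau : gT)
  (hn : (3 <= n)%N)
  (hgen : <<[set rho; tau]>>%g = [set: gT])
  (hrho : (rho ^+ n)%g = 1%g) (htau : (tau ^+ 2)%g = 1%g)
  (hrel : (tau * rho * tau)%g = (rho^-1)%g)
  (hord : #|gT| = n.*2)
  (i j : nat) (hi : (0 < i)%N) (hij : (i < j)%N) (hjn : (j < n)%N) :
  let S := [set tau; (rho ^+ i * tau)%g; (rho ^+ j * tau)%g] in
  (connected_graph (cay_adj S) <-> gcdn (gcdn n i) j = 1%N) /\
  (gcdn (gcdn n i) j = 1%N ->
   let m := gcdn n i in
   exists l : int, (((2 : int) %| (l - Posz m)%R)%Z) /\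
     graph_iso (cay_adj S) (htg_adj (m := m) (n' := (n.*2 %/ m)%N) l)).
Proof.
move=> S; split.
  exact: (conn_part hn hgen hrho htau hrel hord hi hij hjn).
exact: (iso_part hn hgen hrho htau hrel hord hi hij hjn).
Qed.
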